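(* Let $G=(\mathfrak{N},\mathfrak{T},\mathfrak{R},\mathfrak{S})$ be a context-free grammar, $\Sigma$ a set of characters and $(\textsl{Lex},\textsl{Sel})$ a local lexing. For every input $D\in\Sigma^*$, every $k\in\{0,\ldots,|D|\}$ and every $u\in\{0,1,2,\ldots\}$: if $p,q\in\mathcal{P}_k^u$ and there is $n\in\{0,\ldots,|q|\}$ with $|\overline{p}|=|\overline{q_0\ldots q_{n-1}}|\le k$ and $[p\,q_n\ldots q_{|q|-1}]\in\mathcal{L}_{\text{prefix}}$, then $p\,q_n\ldots q_{|q|-1}\in\mathcal{P}_k^u$.
   Context: Notation: for a set $U$, $U^*$ is the set of finite sequences over $U$, $\varepsilon$ the empty sequence, juxtaposition is concatenation, $|\alpha|$ the length and $\alpha_i$ ($0\le i<|\alpha|$) the $i$-th element. A context-free grammar $(\mathfrak{N},\mathfrak{T},\mathfrak{R},\mathfrak{S})$ has disjoint nonterminals $\mathfrak{N}$ and terminals $\mathfrak{T}$, rules $\mathfrak{R}\subseteq\mathfrak{N}\times(\mathfrak{N}\cup\mathfrak{T})^*$ (written $N\rightarrow\alpha$), start symbol $\mathfrak{S}$; $\overset{*}{\Rightarrow}$ is the reflexive-transitive closure of one-step rewriting by rules. $\mathcal{L}_{\text{prefix}}=\{w\in\mathfrak{T}^*\mid\exists\alpha\in(\mathfrak{N}\cup\mathfrak{T})^*.\ \mathfrak{S}\overset{*}{\Rightarrow}w\alpha\}$. Tokens: a token is a pair $x=(t,c)\in\mathfrak{T}\times\Sigma^*$; $[x]=t$, $\overline{x}=c$.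 For a token sequence (path) $q=x_0\ldots x_r$, $[q]=[x_0]\ldots[x_r]$ and $\overline{q}=\overline{x_0}\ldots\overline{x_r}$. Local lexing: a pair $(\textsl{Lex},\textsl{Sel})$ where $\textsl{Lex}$ assigns to each $t\in\mathfrak{T}$ a function $\textsl{Lex}(t)$ which, given $D\in\Sigma^*$ and $k\in\{0,\ldots,|D|\}$, returns a set of tokens $(t,c)$ with $k+|c|\le|D|$ and $c_i=D_{k+i}$ for $0\le i\le|c|-1$; and $\textsl{Sel}$ maps any two token sets $A\subseteq B$ to a token set with $A\subseteq\textsl{Sel}(A,B)\subseteq B$. Path sets: $\operatorname{limit} f\,X=\bigcup_{n\ge0}f^n(X)$. $\operatorname{Append}_k\,T\,P=P\cup\{pt\mid p\in P,\ |\overline{p}|=k,\ t\in T,\ [pt]\in\mathcal{L}_{\text{prefix}}\}$. For $k\in\{0,\ldots,|D|\}$: $\mathcal{X}_k=\{x\in\mathfrak{T}\times\Sigma^*\mid x\in\textsl{Lex}([x])(D,k)\}$; $\mathcal{P}_0^0=\{\varepsilon\}$; $\mathcal{W}_k^u=\{x\in\mathcal{X}_k\mid\exists p\in\mathcal{P}_k^u.\ |\overline{p}|=k\wedge[px]\in\mathcal{L}_{\text{prefix}}\}$; $\mathcal{Z}_k^0=\emptyset$; $\mathcal{Z}_k^{u+1}=\textsl{Sel}(\mathcal{Z}_k^u,\mathcal{W}_k^u)$; $\mathcal{P}_k^{u+1}=\operatorname{limit}(\operatorname{Append}_k\,\mathcal{Z}_k^{u+1})\,\mathcal{P}_k^u$;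 $\mathcal{P}_k^\infty=\bigcup_u\mathcal{P}_k^u$; $\mathcal{P}_{k+1}^0=\mathcal{P}_k^\infty$. *)

(* Defs.v *)
(* Sets are represented as predicates (_ -> Prop). *)
From Stdlib Require Import List Arith Relations.
Import ListNotations.
Set Implicit Arguments.

Section LocalLexing.
Variables (Nt Tm Sigma : Type).

Definition symbol := (Nt + Tm)%type.

Definition derives1 (R : Nt -> list symbol -> Prop) (a b : list symbol) : Prop :=
  exists (l r : list symbol) (N : Nt) (alpha : list symbol),
    R N alpha /\ a = l ++ inl N :: r /\ b = l ++ alpha ++ r.

Definition derives (R : Nt -> list symbol -> Prop) : relation (list symbol) :=
  clos_refl_trans (list symbol) (derives1 R).

Definition Lprefix (R : Nt -> list symbol -> Prop) (St : Nt) (w : list Tm) : Prop :=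
  exists alpha : list symbol, derives R [inl St] (map inr w ++ alpha).

(* tokens x = (t, c); [x] = fst x, overline x = snd x *)
Definition token := (Tm * list Sigma)%type.
Definition path := list token.
Definition terms (q : path) : list Tm := map fst q.
Definition chars (q : path) : list Sigma := concat (map snd q).

Definition lexer := Tm -> list Sigma -> nat -> token -> Prop.
Definition selector := (token -> Prop) -> (token -> Prop) -> (token -> Prop).

Definition lex_ok (Lex : lexer) : Prop :=
  forall (t : Tm) (D : list Sigma) (k : nat) (x : token),
    k <= length D -> Lex t D k x ->
    fst x = t /\ k + length (snd x) <= length D /\
    (forall i, i < length (snd x) -> nth_error (snd x) i = nth_error D (k + i)).

Definition sel_ok (Sel : selector) : Prop :=
  forall A B : token -> Prop, (forall x, A x -> B x) ->
    (forall x, A x -> Sel A B x) /\ (forall x, Sel A B x -> B x).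

Definition local_lexing (Lex : lexer) (Sel : selector) : Prop :=
  lex_ok Lex /\ sel_ok Sel.

Variables (R : Nt -> list symbol -> Prop) (St : Nt) (Lex : lexer) (Sel : selector)
          (D : list Sigma).

Definition limit (f : (path -> Prop) -> (path -> Prop)) (X : path -> Prop) : path -> Prop :=
  fun q => exists n, Nat.iter n f X q.

Definition Append (k : nat) (Tset : token -> Prop) (P : path -> Prop) : path -> Prop :=
  fun q => P q \/
    exists p t, P p /\ length (chars p) = k /\ Tset t /\
                Lprefix R St (terms (p ++ [t])) /\ q = p ++ [t].

Definition Xk (k : nat) : token -> Prop := fun x => Lex (fst x) D k x.

Definition Wk (k : nat) (P : path -> Prop) : token -> Prop :=
  fun x => Xk k x /\ exists p, P p /\ length (chars p) = k /\ Lprefix R St (terms (p ++ [x])).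

Fixpoint ZP (k : nat) (P0 : path -> Prop) (u : nat) : (token -> Prop) * (path -> Prop) :=
  match u with
  | 0 => (fun _ => False, P0)
  | S u' =>
      let (Z, P) := ZP k P0 u' in
      let Z' := Sel Z (Wk k P) in
      (Z', limit (Append k Z') P)
  end.

Fixpoint P0 (k : nat) : path -> Prop :=
  match k with
  | 0 => fun q => q = []
  | S k' => fun q => exists u, snd (ZP k' (P0 k') u) q
  end.

Definition Pku (k u : nat) : path -> Prop := snd (ZP k (P0 k) u).

End LocalLexing.

(* Main.v *)
Require Import Defs.
From Stdlib Require Import List Arith Lia Relations.
Import ListNotations.

Section Proof.
Variables (Nt Tm Sigma : Type).
Variables (R : Nt -> list (symbol Nt Tm) -> Prop) (St : Nt)
  (Lex : lexer Tm Sigma) (Sel : selector Tm Sigma) (D : list Sigma).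
Hypothesis HS : sel_ok Sel.

Definition Zs j u := fst (ZP R St Lex Sel D j (P0 R St Lex Sel D j) u).
Definition Ps j u := Pku R St Lex Sel D j u.

Lemma ZP_S k X u : ZP R St Lex Sel D k X (S u) =
  (Sel (fst (ZP R St Lex Sel D k X u)) (Wk R St Lex D k (snd (ZP R St Lex Sel D k X u))),
   limit (Append R St k (Sel (fst (ZP R St Lex Sel D k X u))
        (Wk R St Lex D k (snd (ZP R St Lex Sel D k X u))))) (snd (ZP R St Lex Sel D k X u))).
Proof. simpl. destruct (ZP R St Lex Sel D k X u). reflexivity. Qed.

Lemma chars_app (l1 l2 : path Tm Sigma) : chars (l1 ++ l2) = chars l1 ++ chars l2.
Proof. unfold chars. rewrite map_app, concat_app. reflexivity. Qed.

Lemma terms_app (l1 l2 : path Tm Sigma) : terms (l1 ++ l2) = terms l1 ++ terms l2.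
Proof. unfold terms. apply map_app. Qed.

Lemma Lprefix_app w v : Lprefix R St (w ++ v) -> Lprefix R St w.
Proof.
  intros [alpha H]. exists (map inr v ++ alpha).
  rewrite map_app, <- app_assoc in H. exact H.
Qed.

Lemma Lprefix_nil : Lprefix R St [].
Proof. exists [inl St]. apply rt_refl. Qed.

Lemma P_mono1 k u q : Ps k u q -> Ps k (S u) q.
Proof.
  unfold Ps, Pku. rewrite ZP_S. simpl. intros H. exists 0. exact H.
Qed.

Lemma P_mono k u u' q : u <= u' -> Ps k u q -> Ps k u' q.
Proof. induction 1; auto using P_mono1. Qed.

Lemma limit_step k T X (p : path Tm Sigma) t :
  limit (Append R St k T) X p -> length (chars p) = k -> T t ->
  Lprefix R St (terms (p ++ [t])) -> limit (Append R St k T) X (p ++ [t]).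
Proof.
  intros [m H] Hc Ht Hl. exists (S m). simpl. right. exists p, t. auto.
Qed.

Lemma Z_sub_W k u x : Zs k u x -> Wk R St Lex D k (Ps k u) x.
Proof.
  revert x. induction u as [|u IH]; intros x Hx.
  - unfold Zs in Hx. simpl in Hx. destruct Hx.
  - unfold Zs in Hx. rewrite ZP_S in Hx. simpl in Hx.
    apply (proj2 (HS _ _ IH)) in Hx.
    destruct Hx as [Hx [p [Hp Hp2]]]. split; [exact Hx|].
    exists p. split; [apply P_mono1; exact Hp | exact Hp2].
Qed.

Lemma Z_mono1 k u x : Zs k u x -> Zs k (S u) x.
Proof.
  intros H. unfold Zs. rewrite ZP_S. simpl.
  apply (proj1 (HS _ _ (Z_sub_W k u))). exact H.
Qed.

Lemma Z_mono k u u' x : u <= u' -> Zs k u x -> Zs k u' x.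
Proof. induction 1; auto using Z_mono1. Qed.

Lemma Z0 k x : ~ Zs k 0 x.
Proof. unfold Zs. simpl. auto. Qed.

Definition Good k u (q : path Tm Sigma) :=
  Lprefix R St (terms q) /\
  forall a x b, q = a ++ x :: b ->
    length (chars a) <= k /\
    (length (chars a) < k -> exists v, Zs (length (chars a)) v x) /\
    (length (chars a) = k -> Zs k u x).

Lemma split_last (a p : path Tm Sigma) x t b :
  p ++ [t] = a ++ x :: b ->
  (a = p /\ x = t /\ b = []) \/ (exists b', p = a ++ x :: b' /\ b = b' ++ [t]).
Proof.
  intros E. destruct (exists_last (l := x :: b) ltac:(discriminate)) as [l [y Ey]].
  rewrite Ey, app_assoc in E. apply app_inj_tail in E. destruct E as [E1 E2]. subst y.
  destruct b as [|z b'] using rev_ind.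
  - left. simpl in Ey. destruct l as [|w l]; [|destruct l; discriminate].
    simpl in Ey. injection Ey as ->. simpl in E1. rewrite app_nil_r in E1. auto.
  - right. exists b'. rewrite app_comm_cons in Ey. apply app_inj_tail in Ey.
    destruct Ey as [<- <-]. split; auto.
Qed.

Lemma Good_mono1 k u q : Good k u q -> Good k (S u) q.
Proof.
  intros [HL HG]. split; auto. intros a x b E. destruct (HG a x b E) as [H1 [H2 H3]].
  repeat split; auto. intros. apply Z_mono1; auto.
Qed.

Lemma step_good k u : (forall q, Ps k u q -> Good k u q) ->
  forall q, Ps k (S u) q -> Good k (S u) q.
Proof.
  intros H q. unfold Ps, Pku. rewrite ZP_S. simpl. intros [m Hm].
  revert q Hm. induction m as [|m IHm]; intros q Hm; simpl in Hm.
  - apply Good_mono1, H, Hm.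
  - destruct Hm as [Hm | (p & t & Hp & Hc & Ht & Hl & ->)]; [apply IHm; exact Hm|].
    assert (HZ : Zs k (S u) t) by (unfold Zs; rewrite ZP_S; exact Ht).
    destruct (IHm p Hp) as [_ HGp].
    split; [exact Hl|]. intros a x b E.
    destruct (split_last _ _ _ _ _ E) as [[-> [-> ->]] | [b' [Ep ->]]].
    + split; [lia|]. split; [intros; lia|]. intros _. exact HZ.
    + apply (HGp a x b' Ep).
Qed.

Lemma fwd k : forall u q, Ps k u q -> Good k u q.
Proof.
  induction k as [|k IHk]; intros u; induction u as [|u IHu].
  - intros q Hq. unfold Ps, Pku in Hq. simpl in Hq. subst q.
    split; [apply Lprefix_nil|]. intros a x b E. destruct a; discriminate.
  - apply step_good, IHu.
  - intros q [u' Hq]. destruct (IHk u' q Hq) as [HL HG]. split; auto.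
    intros a x b E. destruct (HG a x b E) as [H1 [H2 H3]].
    split; [lia|]. split; [|lia]. intros _.
    destruct (Nat.eq_dec (length (chars a)) k) as [e|ne].
    + exists u'. rewrite e. auto.
    + apply H2. lia.
  - apply step_good, IHu.
Qed.

Lemma nil_in k u : Ps k u [].
Proof.
  revert u. induction k as [|k IHk]; intros u.
  - apply (P_mono 0 0 u); [lia|]. reflexivity.
  - apply (P_mono (S k) 0 u); [lia|]. exists 0. apply IHk.
Qed.

Lemma lift k : forall j u' u q, j < k -> Ps j u' q -> Ps k u q.
Proof.
  induction k as [|k IHk]; intros j u' u q Hj H; [lia|].
  apply (P_mono (S k) 0 u); [lia|].
  destruct (Nat.eq_dec j k) as [->|ne].
  - exists u'. exact H.
  - exists 0. apply (IHk j u'); [lia|exact H].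
Qed.

Lemma bound (C : path Tm Sigma -> token Tm Sigma -> Prop)
  (Q : nat -> token Tm Sigma -> Prop)
  (HC : forall a y, C a y \/ ~ C a y)
  (HQ : forall v v' y, v <= v' -> Q v y -> Q v' y) :
  forall q, (forall a y b, q = a ++ y :: b -> C a y -> exists v, Q v y) ->
  exists U, forall a y b, q = a ++ y :: b -> C a y -> Q U y.
Proof.
  induction q as [|z l IH] using rev_ind; intros H.
  - exists 0. intros a y b E. destruct a; discriminate.
  - destruct IH as [U1 HU1].
    { intros a y b E Hc. apply (H a y (b ++ [z])); auto.
      rewrite E, <- app_assoc. reflexivity. }
    destruct (HC l z) as [Hc|Hn].
    + destruct (H l z [] eq_refl Hc) as [v Hv].
      exists (max U1 v). intros a y b E Hc'.
      destruct (split_last _ _ _ _ _ E) as [[-> [-> ->]] | [b' [Ep ->]]].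
      * apply (HQ v); [lia|exact Hv].
      * apply (HQ U1); [lia|]. apply (HU1 a y b'); auto.
    + exists U1. intros a y b E Hc'.
      destruct (split_last _ _ _ _ _ E) as [[-> [-> ->]] | [b' [Ep ->]]].
      * contradiction.
      * apply (HU1 a y b'); auto.
Qed.

Lemma len_chars_le (q a b : path Tm Sigma) x : q = a ++ x :: b ->
  length (chars a) <= length (chars q).
Proof. intros ->. rewrite chars_app, length_app. lia. Qed.

Lemma bwd : forall q k u, Good k u q -> Ps k u q.
Proof.
  induction q as [|x q' IH] using rev_ind; intros k u [HL HG].
  - apply nil_in.
  - assert (HGq : Good k u q').
    { split. rewrite terms_app in HL. eapply Lprefix_app; eauto.
      intros a y b E. apply (HG a y (b ++ [x])). rewrite E, <- app_assoc. reflexivity. }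
    destruct (HG q' x [] eq_refl) as [H1 [H2 H3]].
    set (j := length (chars q')) in *.
    destruct (Nat.eq_dec j k) as [e|ne].
    + specialize (H3 e). destruct u as [|u0]; [destruct (Z0 _ _ H3)|].
      pose proof (IH k (S u0) HGq) as Hq'.
      unfold Ps, Pku in *. rewrite ZP_S in *. simpl in *.
      apply limit_step; auto.
      unfold Zs in H3. rewrite ZP_S in H3. exact H3.
    + destruct (H2 ltac:(lia)) as [vx Hvx].
      destruct HGq as [HLq HGq'].
      destruct (bound (fun a y => length (chars a) = j) (fun v y => Zs j v y))
        with (q := q') as [U HU].
      { intros a y. destruct (Nat.eq_dec (length (chars a)) j); auto. }
      { intros v v' y Hv. apply Z_mono; auto. }
      { intros a y b E Hc. destruct (HGq' a y b E) as [_ [G2 _]].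
        rewrite <- Hc. apply G2. lia. }
      set (u' := max U vx).
      assert (Hx : Zs j u' x) by (apply (Z_mono j vx); [lia|auto]).
      assert (Hg : Good j u' q').
      { split; auto. intros a y b E.
        pose proof (len_chars_le _ _ _ _ E) as Hle. fold j in Hle.
        destruct (HGq' a y b E) as [_ [G2 _]].
        split; [lia|]. split.
        - intros. apply G2. lia.
        - intros Hc. apply (Z_mono j U); [lia|]. apply (HU a y b E Hc). }
      pose proof (IH j u' Hg) as Hq'.
      apply (lift k j u'); [lia|].
      destruct u' as [|u0] eqn:Eu; [destruct (Z0 _ _ Hx)|].
      unfold Ps, Pku in *. rewrite ZP_S in *. simpl in *.
      apply limit_step; auto.
      unfold Zs in Hx. rewrite ZP_S in Hx. exact Hx.
Qed.

End Proof.

Theorem theorem3 (Nt Tm Sigma : Type)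
  (R : Nt -> list (symbol Nt Tm) -> Prop) (S : Nt)
  (Lex : lexer Tm Sigma) (Sel : selector Tm Sigma)
  (HLL : local_lexing Lex Sel)
  (D : list Sigma) (k u : nat) (Hk : k <= length D)
  (p q : path Tm Sigma)
  (Hp : Pku R S Lex Sel D k u p) (Hq : Pku R S Lex Sel D k u q)
  (n : nat) (Hn : n <= length q)
  (Hlen : length (chars p) = length (chars (firstn n q)))
  (Hlek : length (chars p) <= k)
  (Hpre : Lprefix R S (terms (p ++ skipn n q))) :
  Pku R S Lex Sel D k u (p ++ skipn n q).
Proof.
  destruct HLL as [_ HS].
  destruct (fwd _ _ _ R S Lex Sel D HS k u p Hp) as [_ Gp].
  destruct (fwd _ _ _ R S Lex Sel D HS k u q Hq) as [_ Gq].
  apply (bwd _ _ _ R S Lex Sel D HS). split; [exact Hpre|].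
  intros a x b E.
  apply app_eq_app in E. destruct E as [l [[E1 E2] | [E1 E2]]].
  - destruct l as [|y l].
    + simpl in E2. rewrite app_nil_r in E1. subst a.
      assert (Eq : q = firstn n q ++ x :: b) by (rewrite E2; symmetry; apply firstn_skipn).
      specialize (Gq _ x b Eq). rewrite Hlen. exact Gq.
    + injection E2 as <- E2. apply (Gp a x l E1).
  - subst a.
    assert (Eq : q = (firstn n q ++ l) ++ x :: b)
      by (rewrite <- app_assoc, <- E2; symmetry; apply firstn_skipn).
    specialize (Gq _ x b Eq).
    rewrite !chars_app, !length_app in *. rewrite Hlen. exact Gq.
Qed.
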